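(* Let $f \in \mathcal{S}^1_{\mu,L}(\mathbb{R}^d)$ with $0<\mu\le L$, let $x^\star$ be its unique minimizer, let $r\ge 2$, $0<s<1/L$, and $K := \max\left\{0, \frac{3r^2 - 4r - 12}{8}\right\}$. Let $\{x_k\},\{y_k\},\{z_k\}$ be generated by M-NAG from $x_0=y_0\in\mathbb{R}^d$, and for integers $k\ge 0$ define \[ \mathcal{E}(k) := s(k+1)(k+r+1)\big(f(x_{k+1}) - f(x^\star)\big) + \frac12\Big\|k(y_k - x_k) + r(y_k - x^\star) - (k+r)s\nabla f(y_k)\Big\|^2 . \] Then for every integer $k\ge K$, \[ \mathcal{E}(k+1) - \mathcal{E}(k) \le -\mu s\cdot\frac{1 - Ls}{4}\cdot \mathcal{E}(k+1). \]
   Context: $\mathcal{S}^1_{\mu,L}(\mathbb{R}^d)$ denotes the class of continuously differentiable convex functions $f:\mathbb{R}^d\to\mathbb{R}$ whose gradient is $L$-Lipschitz and which are $\mu$-strongly convex, $f(y)\ge f(x)+\langle\nabla f(x),y-x\rangle+\frac{\mu}{2}\|y-x\|^2$ for all $x,y$. M-NAG with step size $s$ and momentum parameter $r$ is the iteration, for $k \ge 0$: $z_k = y_k - s\nabla f(y_k)$; $\; x_{k+1} = z_k$ if $f(z_k)\le f(x_k)$ and $x_{k+1} = x_k$ otherwise; $\; y_{k+1} = x_{k+1} + \frac{k}{k+r+1}(x_{k+1} - x_k) + \frac{k+r}{k+r+1}(z_k - x_{k+1})$. *)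

(* Defs.v *)
From HB Require Import structures.
From mathcomp Require Import all_boot all_order all_algebra.
From mathcomp Require Import all_classical all_reals all_analysis.
Set Implicit Arguments. Unset Strict Implicit. Unset Printing Implicit Defensive.
Import Order.TTheory GRing.Theory Num.Theory.
Import numFieldNormedType.Exports.
Local Open Scope ring_scope.

Section Defs.
Variables (R : realType) (d : nat).
Notation V := 'rV[R]_d.

Definition dotv (u v : V) : R := (u *m v^T) 0 0.
Definition enorm (u : V) : R := Num.sqrt (dotv u u).

Definition is_gradient (f : V -> R) (g : V -> V) : Prop :=
  forall x, differentiable f x /\ forall h, 'd f x h = dotv (g x) h.

Definition in_S1 (mu L : R) (f : V -> R) (g : V -> V) : Prop :=
  [/\ is_gradient f g, continuous g,
      (forall x y, enorm (g x - g y) <= L * enorm (x - y))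
    & (forall x y, f x + dotv (g x) (y - x) + mu / 2 * dotv (y - x) (y - x) <= f y)].

Definition mnag_step (f : V -> R) (g : V -> V) (s r : R) (k : nat) (xy : V * V)
  : V * V :=
  let: (x, y) := xy in
  let z := y - s *: g y in
  let x' := if f z <= f x then z else x in
  let y' := x' + (k%:R / (k%:R + r + 1)) *: (x' - x)
               + ((k%:R + r) / (k%:R + r + 1)) *: (z - x') in
  (x', y').

Fixpoint mnag (f : V -> R) (g : V -> V) (s r : R) (x0 : V) (k : nat) : V * V :=
  match k with
  | 0 => (x0, x0)
  | k'.+1 => mnag_step f g s r k' (mnag f g s r x0 k')
  end.

Definition mx f g s r x0 k := (mnag f g s r x0 k).1.
Definition my f g s r x0 k := (mnag f g s r x0 k).2.

Definition energy (f : V -> R) (g : V -> V) (s r : R) (x0 xstar : V) (k : nat) : R :=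
  let xk := mx f g s r x0 k in
  let yk := my f g s r x0 k in
  s * (k%:R + 1) * (k%:R + r + 1) * (f (mx f g s r x0 k.+1) - f xstar)
  + 1 / 2 * (let w := k%:R *: (yk - xk) + r *: (yk - xstar) - ((k%:R + r) * s) *: g yk
             in dotv w w).
End Defs.

(* Main.v *)
Require Import Defs.
From HB Require Import structures.
From mathcomp Require Import all_boot all_order all_algebra.
From mathcomp Require Import all_classical all_reals all_analysis.
From mathcomp Require Import ring lra.
Import Order.TTheory GRing.Theory Num.Theory.
Local Open Scope ring_scope.


Section Vec.
Variables (R : realType) (d : nat).
Notation V := 'rV[R]_d.
Implicit Types u v w : V.

Lemma dotvE u v : dotv u v = \sum_(i < d) u 0 i * v 0 i.
Proof. by rewrite /dotv !mxE; apply: eq_bigr => i _; rewrite mxE. Qed.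

Lemma dotvC u v : dotv u v = dotv v u.
Proof. by rewrite !dotvE; apply: eq_bigr => i _; rewrite mulrC. Qed.

Lemma dotvDl u v w : dotv (u + v) w = dotv u w + dotv v w.
Proof. by rewrite !dotvE -big_split; apply: eq_bigr => i _; rewrite mxE mulrDl. Qed.

Lemma dotvZl a u v : dotv (a *: u) v = a * dotv u v.
Proof. by rewrite !dotvE mulr_sumr; apply: eq_bigr => i _; rewrite mxE mulrA. Qed.

Lemma dotvNl u v : dotv (- u) v = - dotv u v.
Proof. by rewrite -scaleN1r dotvZl mulN1r. Qed.

Lemma dotvBl u v w : dotv (u - v) w = dotv u w - dotv v w.
Proof. by rewrite dotvDl dotvNl. Qed.

Lemma dotvDr u v w : dotv w (u + v) = dotv w u + dotv w v.
Proof. by rewrite !(dotvC w) dotvDl. Qed.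

Lemma dotvZr a u v : dotv v (a *: u) = a * dotv v u.
Proof. by rewrite !(dotvC v) dotvZl. Qed.

Lemma dotvBr u v w : dotv w (u - v) = dotv w u - dotv w v.
Proof. by rewrite !(dotvC w) dotvBl. Qed.

Lemma dotvNr u v : dotv v (- u) = - dotv v u.
Proof. by rewrite !(dotvC v) dotvNl. Qed.

Lemma dotv0l v : dotv 0 v = 0.
Proof. by rewrite -(scale0r 0) dotvZl mul0r. Qed.

Lemma dotv_ge0 u : 0 <= dotv u u.
Proof. by rewrite dotvE; apply: sumr_ge0 => i _; rewrite -expr2 sqr_ge0. Qed.

Definition dotvL := (dotvDl, dotvBl, dotvZl, dotvNl, dotvDr, dotvBr, dotvZr, dotvNr).

Lemma dotv_amgm u h l : 0 < l -> 2 * dotv u h <= l * dotv u u + dotv h h / l.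
Proof.
move=> l0; have := dotv_ge0 (l *: u - h).
rewrite !dotvL (dotvC h u) => H.
rewrite -(ler_pM2l l0) mulrDr (mulrCA l (dotv h h)) divff ?gt_eqF // mulr1.
lra.
Qed.

Lemma dotv_lip c u h : 0 < c -> dotv u u <= c ^+ 2 * dotv h h -> dotv u h <= c * dotv h h.
Proof.
move=> c0 H; have := @dotv_amgm u h c^-1; rewrite invr_gt0 c0 => /(_ isT).
rewrite invrK => H2.
have : c^-1 * dotv u u <= c^-1 * (c ^+ 2 * dotv h h) by rewrite ler_pM2l ?invr_gt0.
rewrite mulrA expr2 mulrA mulVf ?gt_eqF // mul1r => H3.
lra.
Qed.

End Vec.


Section Descent.
Variables (R : realType) (d : nat).
Notation V := 'rV[R]_d.
Variables (f : V -> R) (g : V -> V) (mu L : R).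
Hypothesis mu0 : 0 <= mu.
Hypothesis L0 : 0 < L.
Hypothesis Hcvx : forall x y, f x + dotv (g x) (y - x) + mu / 2 * dotv (y - x) (y - x) <= f y.
Hypothesis Hlip : forall x y, dotv (g x - g y) (g x - g y) <= L ^+ 2 * dotv (x - y) (x - y).

Lemma descent_N (y h : V) (N : nat) : (0 < N)%N -> forall m : nat,
  f (y + (m%:R / N%:R) *: h) - f y <=
   m%:R / N%:R * dotv (g y) h + L * dotv h h * (m%:R * (m%:R + 1)) / (2 * N%:R ^+ 2).
Proof.
move=> N0; have Nr : 0 < N%:R :> R by rewrite ltr0n.
elim=> [|m IH].
  by rewrite mul0r scale0r addr0 subrr mul0r mul0r mulr0 mul0r addr0.
pose t := (m%:R / N%:R : R); set t' := m.+1%:R / N%:R.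
pose P := y + t *: h; set P' := y + t' *: h.
have E1 : P - P' = (- N%:R^-1) *: h.
  apply/rowP => j; rewrite !mxE /t /t' -natr1; field; exact: lt0r_neq0.
have E2 : P' - y = t' *: h by rewrite /P' addrC addKr.
have Ht' : 0 < t' by rewrite divr_gt0 // ltr0n.
have Hc := Hcvx P' P; rewrite E1 dotvZr in Hc.
have Hm : 0 <= mu / 2 * dotv (- N%:R^-1 *: h) (- N%:R^-1 *: h).
  by rewrite mulr_ge0 ?divr_ge0 ?dotv_ge0.
have Hl : dotv (g P' - g y) (g P' - g y) <= (L * t') ^+ 2 * dotv h h.
  have -> : (L * t') ^+ 2 * dotv h h = L ^+ 2 * (t' * (t' * dotv h h)) by ring.
  by have := Hlip P' y; rewrite E2 dotvZl dotvZr.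
have Hd := @dotv_lip _ _ _ _ _ (mulr_gt0 L0 Ht') Hl.
have Eg : dotv (g P') h = dotv (g y) h + dotv (g P' - g y) h.
  by rewrite dotvBl addrC subrK.
have Hn : 0 < N%:R^-1 :> R by rewrite invr_gt0.
have H3 : N%:R^-1 * dotv (g P' - g y) h <= N%:R^-1 * (L * t' * dotv h h).
  by rewrite ler_pM2l.
have Eid : t * dotv (g y) h + L * dotv h h * (m%:R * (m%:R + 1)) / (2 * N%:R ^+ 2)
   + N%:R^-1 * dotv (g y) h + N%:R^-1 * (L * t' * dotv h h)
   = t' * dotv (g y) h + L * dotv h h * (m.+1%:R * (m.+1%:R + 1)) / (2 * N%:R ^+ 2).
  rewrite /t /t' -natr1; field; exact: lt0r_neq0.
rewrite Eg in Hc.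
move: IH; rewrite -/t -/P => IH.
lra.
Qed.

Lemma arch_le0 (A D : R) : (forall N : nat, (0 < N)%N -> A <= D / N%:R) -> 0 <= D -> A <= 0.
Proof.
move=> H D0; rewrite leNgt; apply/negP => A0.
set N := (Num.trunc (D / A)).+1.
have HN := H N isT.
have := truncnS_gt (D / A); rewrite -/N => HN2.
have Nr : 0 < N%:R :> R by rewrite ltr0n.
move: HN; rewrite ler_pdivlMr // => HN.
move: HN2; rewrite ltr_pdivrMr // => HN2.
lra.
Qed.

Lemma descent (y h : V) : f (y + h) <= f y + dotv (g y) h + L / 2 * dotv h h.
Proof.
rewrite -subr_ge0 -oppr_le0 opprB.
apply: (@arch_le0 _ (L * dotv h h / 2)).
  move=> N N0; have Nr : 0 < N%:R :> R by rewrite ltr0n.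
  have := @descent_N y h N N0 N; rewrite divff ?lt0r_neq0 // scale1r mul1r => H.
  have E : L * dotv h h * (N%:R * (N%:R + 1)) / (2 * N%:R ^+ 2) =
     L / 2 * dotv h h + L * dotv h h / 2 / N%:R.
    field; exact: lt0r_neq0.
  rewrite E in H; lra.
by rewrite divr_ge0 // mulr_ge0 ?dotv_ge0 // ltW.
Qed.

End Descent.


Lemma final_alg (R : realType) (kk r s mu L fX2 fZ fY fX fs pp qq GG pG qG ww0 ww1 : R) :
 0 <= kk -> 2 <= r -> 0 < s -> 0 < mu -> mu <= L -> L * s < 1 ->
 fs <= fX2 -> fX2 <= fZ -> fZ <= fY - s * (1 - L * s / 2) * GG ->
 fY <= fX + pG - mu / 2 * pp -> fY <= fs + qG - mu / 2 * qq ->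
 2 * mu * qG <= mu ^+ 2 * qq + GG ->
 0 <= pp -> 0 <= qq -> 0 <= GG ->
 ww1 = ww0 - 2 * (kk + 1 + r) * s * ((kk + 1) * pG + r * qG) + (kk + 1 + r) ^+ 2 * s ^+ 2 * GG ->
 ww1 <= 3 * ((kk + 1) ^+ 2 * pp + r ^+ 2 * qq + (kk + 1 + r) ^+ 2 * s ^+ 2 * GG) ->
 s * (kk + 1 + 1) * (kk + 1 + r + 1) * (fX2 - fs) + 1 / 2 * ww1
  - (s * (kk + 1) * (kk + r + 1) * (fX - fs) + 1 / 2 * ww0)
 <= - (mu * s * ((1 - L * s) / 4) * (s * (kk + 1 + 1) * (kk + 1 + r + 1) * (fX2 - fs) + 1 / 2 * ww1)).
Proof.
move=> k0 r2 s0 mu0 muL Ls H2 HZ Hdesc Hc1 Hc2 Hamgm pp0 qq0 GG0 Eww Hww.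
have n0 : 0 <= (kk + 1) by  lra.
have A0 : 0 <= (kk + 1 + r) by  lra.
have L0 : 0 < L by lra.
have th0 : 0 <= 1 - L * s by lra.
have F20 : 0 <= fX2 - fs by lra.
have cge : 0 <= (kk + 1 + r) ^+ 2 - ((kk + 1 + 1) * (kk + 1 + r + 1)).
  have h1 : 0 <= (r - 2) * (kk + 1) by rewrite mulr_ge0 //; lra.
  have h2 : 0 <= (r - 2) * (r + 1) by rewrite mulr_ge0 //; lra.
  nra.
have H1 : 0 <= s * (fX2 - fs) * ((kk + 1 + r) ^+ 2 - ((kk + 1 + 1) * (kk + 1 + r + 1))) by rewrite !mulr_ge0 // ltW.
have T1 : fX2 - fs <= (fY - fs) - s * (1 - L * s / 2) * GG by lra.
have T1' : s * (kk + 1 + r) ^+ 2 * (fX2 - fs) <= s * (kk + 1 + r) ^+ 2 * ((fY - fs) - s * (1 - L * s / 2) * GG).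
  by rewrite ler_wpM2l // mulr_ge0 ?exprn_ge0 // ltW.
have T2a : (kk + 1) * (kk + 1 + r) * (fY - fs) <= (kk + 1) * (kk + 1 + r) * (fX - fs + pG - mu / 2 * pp).
  by rewrite ler_wpM2l ?mulr_ge0 //; lra.
have T2b : r * (kk + 1 + r) * (fY - fs) <= r * (kk + 1 + r) * (qG - mu / 2 * qq).
  by rewrite ler_wpM2l ?mulr_ge0 //; lra.
have T2a' : s * ((kk + 1) * (kk + 1 + r) * (fY - fs)) <= s * ((kk + 1) * (kk + 1 + r) * (fX - fs + pG - mu / 2 * pp)).
  by rewrite ler_wpM2l // ltW.
have T2b' : s * (r * (kk + 1 + r) * (fY - fs)) <= s * (r * (kk + 1 + r) * (qG - mu / 2 * qq)).
  by rewrite ler_wpM2l // ltW.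
have Key1 : s * ((kk + 1 + 1) * (kk + 1 + r + 1)) * (fX2 - fs) + 1 / 2 * ww1 - (s * ((kk + 1) * (kk + 1 + r)) * (fX - fs) + 1 / 2 * ww0)
   <= - (s * (kk + 1 + r) * mu / 2 * ((kk + 1) * pp + r * qq)) - s ^+ 2 * (kk + 1 + r) ^+ 2 * (1 - L * s) / 2 * GG.
  rewrite Eww; lra.
have U1 : fX2 - fs <= fY - fs.
  have : 0 <= s * (1 - L * s / 2) * GG by rewrite !mulr_ge0 // ?ltW //; lra.
  lra.
have U2 : mu * (fY - fs) <= GG / 2.
  have : mu * (fY - fs) <= mu * (qG - mu / 2 * qq).
    rewrite ler_wpM2l; lra.
  have -> : mu * (qG - mu / 2 * qq) = (2 * mu * qG - mu ^+ 2 * qq) / 2 by field.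
  lra.
have V1 : mu * (s * ((kk + 1 + 1) * (kk + 1 + r + 1)) * (fX2 - fs)) <= s * (kk + 1 + r) ^+ 2 * (GG / 2).
  have h : s * ((kk + 1 + 1) * (kk + 1 + r + 1)) * (fX2 - fs) <= s * (kk + 1 + r) ^+ 2 * (fY - fs).
    have h1 : s * (kk + 1 + r) ^+ 2 * (fX2 - fs) <= s * (kk + 1 + r) ^+ 2 * (fY - fs).
      by rewrite ler_wpM2l // mulr_ge0 ?exprn_ge0 // ltW.
    lra.
  have h2 : mu * (s * ((kk + 1 + 1) * (kk + 1 + r + 1)) * (fX2 - fs)) <= mu * (s * (kk + 1 + r) ^+ 2 * (fY - fs)) by rewrite ler_wpM2l // ltW.
  have h3 : s * (kk + 1 + r) ^+ 2 * (mu * (fY - fs)) <= s * (kk + 1 + r) ^+ 2 * (GG / 2).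
    by rewrite ler_wpM2l // mulr_ge0 ?exprn_ge0 // ltW.
  have E : mu * (s * (kk + 1 + r) ^+ 2 * (fY - fs)) = s * (kk + 1 + r) ^+ 2 * (mu * (fY - fs)) by ring.
  lra.
have st0 : 0 <= s * ((1 - L * s) / 4) by rewrite mulr_ge0 ?divr_ge0 // ltW.
have V1' : s * ((1 - L * s) / 4) * (mu * (s * ((kk + 1 + 1) * (kk + 1 + r + 1)) * (fX2 - fs)))
    <= s * ((1 - L * s) / 4) * (s * (kk + 1 + r) ^+ 2 * (GG / 2)) by rewrite ler_wpM2l.
have mst0 : 0 <= mu * s * ((1 - L * s) / 4) / 2 by rewrite !mulr_ge0 ?divr_ge0 // ltW.
have V2 : mu * s * ((1 - L * s) / 4) / 2 * ww1
   <= mu * s * ((1 - L * s) / 4) / 2 * (3 * ((kk + 1) ^+ 2 * pp + r ^+ 2 * qq + (kk + 1 + r) ^+ 2 * s ^+ 2 * GG)).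
  by rewrite ler_wpM2l.
have msp : 0 <= mu * s * (kk + 1) * pp by rewrite !mulr_ge0 // ltW.
have msq : 0 <= mu * s * r * qq by rewrite !mulr_ge0 // ?ltW //; lra.
have W1 : 0 <= mu * s * (kk + 1) * pp * (4 * (kk + 1 + r) - 3 * (1 - L * s) * (kk + 1)).
  rewrite mulr_ge0 //.
  have : 0 <= L * s * (kk + 1) by rewrite !mulr_ge0 // ltW.
  lra.
have W2 : 0 <= mu * s * r * qq * (4 * (kk + 1 + r) - 3 * (1 - L * s) * r).
  rewrite mulr_ge0 //.
  have : 0 <= L * s * r by rewrite !mulr_ge0 // ?ltW //; lra.
  lra.
have mus : mu * s <= L * s by rewrite ler_pM2r.
have W3 : 0 <= s ^+ 2 * (kk + 1 + r) ^+ 2 * GG * (1 - L * s) * (1 - mu * s).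
  rewrite !mulr_ge0 ?exprn_ge0 //; lra.
lra.
Qed.

Arguments dotvC {R d}.
Arguments dotv_ge0 {R d}.

Section Glue.
Variables (R : realType) (d : nat).
Notation V := 'rV[R]_d.

Lemma dot_sub (u G : V) c : dotv (u - c *: G) (u - c *: G) = dotv u u - 2 * c * dotv G u + c ^+ 2 * dotv G G.
Proof. rewrite !dotvL (dotvC u G); ring. Qed.

Lemma dot_lin (G p q : V) a b : dotv G (a *: p + b *: q) = a * dotv G p + b * dotv G q.
Proof. by rewrite dotvDr !dotvZr. Qed.

Lemma dot3_le (u v w : V) a b c : dotv (a *: u + b *: v - c *: w) (a *: u + b *: v - c *: w)
  <= 3 * (a ^+ 2 * dotv u u + b ^+ 2 * dotv v v + c ^+ 2 * dotv w w).
Proof.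
have E : forall (x : V) e, dotv (e *: x) (e *: x) = e ^+ 2 * dotv x x.
  by move=> x e; rewrite dotvZl dotvZr mulrA expr2.
rewrite -!E; move: (a *: u) (b *: v) (c *: w) => U W Z.
have h1 := dotv_ge0 (U - W); have h2 := dotv_ge0 (U + Z); have h3 := dotv_ge0 (W + Z).
rewrite !dotvL (dotvC W U) (dotvC Z U) (dotvC Z W) in h1 h2 h3 *.
lra.
Qed.

Lemma amgm_mu (u G : V) mu : 2 * mu * dotv G u <= mu ^+ 2 * dotv u u + dotv G G.
Proof.
have h := dotv_ge0 (mu *: u - G); rewrite !dotvL (dotvC u G) in h.
rewrite expr2; lra.
Qed.
End Glue.

Lemma mnag_x (R : realType) (d : nat) (f : 'rV[R]_d -> R) g s r x0 k :
  mx f g s r x0 k.+1 =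
  if f (my f g s r x0 k - s *: g (my f g s r x0 k)) <= f (mx f g s r x0 k)
  then my f g s r x0 k - s *: g (my f g s r x0 k) else mx f g s r x0 k.
Proof. by rewrite /mx /my /=; case: (mnag f g s r x0 k). Qed.

Lemma mnag_y (R : realType) (d : nat) (f : 'rV[R]_d -> R) g s r x0 k :
  my f g s r x0 k.+1 = mx f g s r x0 k.+1
    + (k%:R / (k%:R + r + 1)) *: (mx f g s r x0 k.+1 - mx f g s r x0 k)
    + ((k%:R + r) / (k%:R + r + 1)) *:
        (my f g s r x0 k - s *: g (my f g s r x0 k) - mx f g s r x0 k.+1).
Proof. by rewrite /mx /my /=; case: (mnag f g s r x0 k). Qed.

Lemma energy_eq (R : realType) (d : nat) (f : 'rV[R]_d -> R) g s r x0 xstar k :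
  energy f g s r x0 xstar k =
  s * (k%:R + 1) * (k%:R + r + 1) * (f (mx f g s r x0 k.+1) - f xstar)
  + 1 / 2 * dotv (k%:R *: (my f g s r x0 k - mx f g s r x0 k) + r *: (my f g s r x0 k - xstar)
       - ((k%:R + r) * s) *: g (my f g s r x0 k))
     (k%:R *: (my f g s r x0 k - mx f g s r x0 k) + r *: (my f g s r x0 k - xstar)
       - ((k%:R + r) * s) *: g (my f g s r x0 k)).
Proof. by []. Qed.

Theorem mainTheorem6 (R : realType) (d : nat) (f : 'rV[R]_d -> R)
  (g : 'rV[R]_d -> 'rV[R]_d) (mu L : R) (xstar x0 : 'rV[R]_d) (r s : R) :
  0 < mu -> mu <= L -> in_S1 mu L f g ->
  (forall x, f xstar <= f x) ->
  2 <= r -> 0 < s -> s < 1 / L ->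
  forall k : nat, Num.max 0 ((3 * r ^+ 2 - 4 * r - 12) / 8) <= k%:R ->
  energy f g s r x0 xstar k.+1 - energy f g s r x0 xstar k
    <= - (mu * s * ((1 - L * s) / 4) * energy f g s r x0 xstar k.+1).
Proof.
move=> mu0 muL [Hgr Hgc Hlip Hcvx] Hmin r2 s0 sL k _.
have L0 : 0 < L := lt_le_trans mu0 muL.
have Ls : L * s < 1 by rewrite mulrC -ltr_pdivlMr.
have Hlip2 : forall x y, dotv (g x - g y) (g x - g y) <= L ^+ 2 * dotv (x - y) (x - y).
  move=> x y; have := Hlip x y; rewrite /enorm => H.
  have H0 : 0 <= Num.sqrt (dotv (g x - g y) (g x - g y)) := sqrtr_ge0 _.
  have := ler_pM H0 H0 H H.
  by rewrite -!expr2 exprMn !sqr_sqrtr ?dotv_ge0.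
have Hdesc := @descent R d f g mu L (ltW mu0) L0 Hcvx Hlip2.
have HX2 : f (mx f g s r x0 k.+2) <= f (my f g s r x0 k.+1 - s *: g (my f g s r x0 k.+1)).
  rewrite mnag_x; case: ifPn => //; rewrite -ltNge; exact: ltW.
have Ew0 : k%:R *: (my f g s r x0 k - mx f g s r x0 k) + r *: (my f g s r x0 k - xstar)
       - ((k%:R + r) * s) *: g (my f g s r x0 k)
   = (k%:R + 1) *: (my f g s r x0 k.+1 - mx f g s r x0 k.+1) + r *: (my f g s r x0 k.+1 - xstar).
  rewrite mnag_y; apply/rowP => j; rewrite !mxE.
  have : k%:R + r + 1 != 0 by rewrite gt_eqF //; have := ler0n R k; lra.
  move=> Hne; field.
  exact: Hne.
rewrite !energy_eq -(natr1 k) Ew0.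
set X2 := mx f g s r x0 k.+2.
set X := mx f g s r x0 k.+1.
set Y := my f g s r x0 k.+1.
move: HX2; rewrite -/X2 -/Y => HX2.
apply: (@final_alg R (k%:R) r s mu L (f X2) (f (Y - s *: g Y)) (f Y) (f X) (f xstar)
  (dotv (Y - X) (Y - X)) (dotv (Y - xstar) (Y - xstar)) (dotv (g Y) (g Y))
  (dotv (g Y) (Y - X)) (dotv (g Y) (Y - xstar))).
- exact: ler0n.
- exact: r2.
- exact: s0.
- exact: mu0.
- exact: muL.
- exact: Ls.
- exact: Hmin.
- exact: HX2.
- have := Hdesc Y (- (s *: g Y)); rewrite !dotvL; lra.
- have := Hcvx Y X; rewrite -[X - Y]opprB !dotvNr !dotvNl ?dotvNr ?opprK; lra.
- have := Hcvx Y xstar; rewrite -[xstar - Y]opprB !dotvNr !dotvNl ?dotvNr ?opprK; lra.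
- exact: amgm_mu.
- exact: dotv_ge0.
- exact: dotv_ge0.
- exact: dotv_ge0.
- rewrite dot_sub [dotv (g Y) _]dot_lin; ring.
- by rewrite -exprMn; apply: dot3_le.
Qed.
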